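(* For any positive integer $k$, there exist nonisomorphic graphs $G'$ and $G''$ that are cospectral with respect to the adjacency matrix and satisfy $Z(G')>Z(G'')+k$.
   Context: The zero forcing number $Z(G)$ is the minimum size of a set $S\subseteq V(G)$ such that, if the vertices of $S$ are colored blue and all others white, repeated application of the rule ''a blue vertex with exactly one white neighbor forces that neighbor to become blue'' eventually makes every vertex blue. *)

(* Defs.v *)
From mathcomp Require Import all_boot all_order all_fingroup all_algebra.
Set Implicit Arguments. Unset Strict Implicit. Unset Printing Implicit Defensive.
Import GRing.Theory.

Definition simple_graph (T : finType) (e : rel T) : Prop :=
  (forall x y, e x y = e y x) /\ (forall x, ~~ e x x).

Definition adjmx (n : nat) (e : rel 'I_n) : 'M[int]_n :=
  \matrix_(i, j) ((e i j)%:R)%R.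

(* Cospectral w.r.t. the adjacency matrix: same characteristic polynomial,
   i.e. the same eigenvalues with the same multiplicities. *)
Definition cospectral (n : nat) (e1 e2 : rel 'I_n) : Prop :=
  char_poly (adjmx e1) = char_poly (adjmx e2).

Definition graph_iso (n : nat) (e1 e2 : rel 'I_n) : Prop :=
  exists f : {perm 'I_n}, forall x y, e1 x y = e2 (f x) (f y).

(* One round of the color change rule: every blue vertex v with exactly
   one white neighbour w forces w to become blue. *)
Definition force_step (T : finType) (e : rel T) (S : {set T}) : {set T} :=
  S :|: [set w | [exists v in S,
          [&& e v w, w \notin S &
              [forall u, (e v u && (u \notin S)) ==> (u == w)]]]].

(* Final colouring obtained from S (the rule stabilizes after #|T| rounds). *)
Definition force_closure (T : finType) (e : rel T) (S : {set T}) : {set T} :=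
  iter #|T| (force_step e) S.

Definition zero_forcing_set (T : finType) (e : rel T) (S : {set T}) : bool :=
  force_closure e S == setT.

(* Zero forcing number: minimum size of a zero forcing set (V itself is one). *)
Definition zero_forcing_number (T : finType) (e : rel T) : nat :=
  \big[minn/#|T|]_(S : {set T} | zero_forcing_set e S) #|S|.

(* Main.v *)
Require Import Defs.
From mathcomp Require Import all_boot all_order all_fingroup all_algebra.
From mathcomp Require Import zify.
Set Implicit Arguments. Unset Strict Implicit. Unset Printing Implicit Defensive.
Import GRing.Theory.


Section Uni.
Variables (a b : nat) (e1 : rel 'I_a) (e2 : rel 'I_b).

Definition uni : rel 'I_(a + b) := fun i j =>
  match split i, split j with
  | inl x, inl y => e1 x y
  | inr x, inr y => e2 x y
  | _, _ => false
  end.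

Lemma uniLL x y : uni (lshift b x) (lshift b y) = e1 x y.
Proof. by rewrite /uni !(unsplitK (inl _ _)). Qed.
Lemma uniRR x y : uni (rshift a x) (rshift a y) = e2 x y.
Proof. by rewrite /uni !(unsplitK (inr _ _)). Qed.
Lemma uniLR x y : uni (lshift b x) (rshift a y) = false.
Proof. by rewrite /uni (unsplitK (inl _ _)) (unsplitK (inr _ _)). Qed.
Lemma uniRL x y : uni (rshift a x) (lshift b y) = false.
Proof. by rewrite /uni (unsplitK (inl _ _)) (unsplitK (inr _ _)). Qed.

Lemma uni_simple : simple_graph e1 -> simple_graph e2 -> simple_graph uni.
Proof.
move=> [s1 i1] [s2 i2]; split.
  move=> i j; case: (split_ordP i) => x ->; case: (split_ordP j) => y ->;
  by rewrite ?uniLL ?uniRR ?uniLR ?uniRL.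
by move=> i; case: (split_ordP i) => x ->; rewrite ?uniLL ?uniRR.
Qed.

Lemma adjmx_uni : adjmx uni = block_mx (adjmx e1) 0 0 (adjmx e2).
Proof.
apply/matrixP => i j.
case: (split_ordP i) => x ->; case: (split_ordP j) => y ->;
by rewrite ?block_mxEul ?block_mxEur ?block_mxEdl ?block_mxEdr !mxE
  ?uniLL ?uniRR ?uniLR ?uniRL.
Qed.

Lemma char_poly_uni :
  char_poly (adjmx uni) = (char_poly (adjmx e1) * char_poly (adjmx e2))%R.
Proof.
rewrite /char_poly /char_poly_mx adjmx_uni map_block_mx (scalar_mx_block a b).
rewrite !map_mx0 opp_block_mx add_block_mx !oppr0 !addr0.
by rewrite det_ublock.
Qed.

End Uni.


Definition LB (T : finType) (e : rel T) (c : nat) :=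
  forall t (S : {set T}), iter t (force_step e) S = setT -> c <= #|S|.

Definition UB (T : finType) (e : rel T) (c : nat) :=
  exists S : {set T}, #|S| <= c /\
    forall t, #|T| <= t -> iter t (force_step e) S = setT.

Lemma sub_force_step (T : finType) (e : rel T) (S : {set T}) : S \subset force_step e S.
Proof. exact: subsetUl. Qed.

Lemma force_stepP (T : finType) (e : rel T) (S : {set T}) w :
  w \in force_step e S ->
  w \in S \/ exists2 v, v \in S &
     [/\ e v w, w \notin S & forall u, e v u -> u \notin S -> u = w].
Proof.
rewrite inE => /orP[->|]; first by left.
rewrite inE => /existsP[v /andP[vS /and3P[evw wS /forallP H]]].
right; exists v => //; split => // u evu uS.
by apply/eqP; move: (H u); rewrite evu uS.
Qed.

Lemma force_in (T : finType) (e : rel T) (S : {set T}) v w :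
  v \in S -> e v w -> (forall u, e v u -> u \notin S -> u = w) ->
  w \in force_step e S.
Proof.
move=> vS evw H; rewrite inE; case wS: (w \in S) => //=.
rewrite inE; apply/existsP; exists v; rewrite vS evw wS /=.
apply/forallP => u; apply/implyP => /andP[evu uS]; by rewrite (H u).
Qed.

Lemma iter_fix (T : finType) (e : rel T) (S : {set T}) t :
  force_step e S = S -> iter t (force_step e) S = S.
Proof. by move=> H; elim: t => //= t ->. Qed.

Lemma iter_setT (T : finType) (e : rel T) t :
  iter t (force_step e) setT = setT.
Proof. by apply: iter_fix; rewrite /force_step setTU. Qed.

Lemma LB_deg (T : finType) (e : rel T) c :
  (forall x, ~~ e x x) -> c <= #|T| -> (forall x, c <= #|[set y | e x y]|) ->
  LB e c.
Proof.
move=> irr cT dx t S H.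
case: (boolP (force_step e S \subset S)) => sub.
  have eq : force_step e S = S by apply/eqP; rewrite eqEsubset sub sub_force_step.
  by move: H; rewrite iter_fix // => ->; rewrite cardsT.
case/subsetPn: sub => w /force_stepP [->//|[v vS [evw wS Hu]]] _.
apply: (leq_trans (dx v)).
have sub : [set y | e v y] \subset w |: (S :\ v).
  apply/subsetP => u; rewrite inE => evu; rewrite !inE.
  case: (boolP (u \in S)) => uS.
    rewrite andbT; apply/orP; right; apply/negP => /eqP uv.
    by move: evu; rewrite uv; apply/negP; exact: irr.
  by rewrite (Hu u evu uS) eqxx.
apply: (leq_trans (subset_leq_card sub)).
rewrite cardsU1 (cardsD1 v S) vS.
by case: (w \notin _).
Qed.


Section UniForce.
Variables (a b : nat) (e1 : rel 'I_a) (e2 : rel 'I_b).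
Local Notation E := (uni e1 e2).

Lemma stepL_pre (B : {set 'I_(a+b)}) (B1 : {set 'I_a}) :
  (forall x, lshift b x \in B -> x \in B1) ->
  forall x, lshift b x \in force_step E B -> x \in force_step e1 B1.
Proof.
move=> HB x /force_stepP [/HB xB|[v vB [evx xB Hu]]].
  by apply: (subsetP (sub_force_step _ _)).
case: (split_ordP v) evx vB Hu => v' -> evx vB Hu; last by rewrite uniRL in evx.
rewrite uniLL in evx.
case xB1 : (x \in B1); first by apply: (subsetP (sub_force_step _ _)); rewrite xB1.
apply: (force_in (v := v')) => //; first exact: HB.
move=> u evu uB1; apply: lshift_inj; apply: Hu; first by rewrite uniLL.
by apply: contraNN uB1; apply: HB.
Qed.

Lemma stepR_pre (B : {set 'I_(a+b)}) (B2 : {set 'I_b}) :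
  (forall x, rshift a x \in B -> x \in B2) ->
  forall x, rshift a x \in force_step E B -> x \in force_step e2 B2.
Proof.
move=> HB x /force_stepP [/HB xB|[v vB [evx xB Hu]]].
  by apply: (subsetP (sub_force_step _ _)).
case: (split_ordP v) evx vB Hu => v' -> evx vB Hu; first by rewrite uniLR in evx.
rewrite uniRR in evx.
case xB1 : (x \in B2); first by apply: (subsetP (sub_force_step _ _)); rewrite xB1.
apply: (force_in (v := v')) => //; first exact: HB.
move=> u evu uB1; apply: rshift_inj; apply: Hu; first by rewrite uniRR.
by apply: contraNN uB1; apply: HB.
Qed.

Lemma card_split (S : {set 'I_(a+b)}) :
  #|S| = #|[set x | lshift b x \in S]| + #|[set x | rshift a x \in S]|.
Proof.
rewrite -!sum1_card big_split_ord /=.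
by congr (_ + _); apply: eq_bigl => x; rewrite inE.
Qed.

Lemma LB_uni c1 c2 : LB e1 c1 -> LB e2 c2 -> LB E (c1 + c2).
Proof.
move=> L1 L2 t S H; rewrite card_split.
apply: leq_add.
  apply: (L1 t); apply/setP => x; rewrite inE.
  have: forall x, lshift b x \in iter t (force_step E) S ->
                  x \in iter t (force_step e1) [set x | lshift b x \in S].
    elim: t {H} => [|t IH] y /=; first by rewrite inE.
    by apply: stepL_pre.
  by apply; rewrite H inE.
apply: (L2 t); apply/setP => x; rewrite inE.
have: forall x, rshift a x \in iter t (force_step E) S ->
                x \in iter t (force_step e2) [set x | rshift a x \in S].
  elim: t {H} => [|t IH] y /=; first by rewrite inE.
  by apply: stepR_pre.
by apply; rewrite H inE.
Qed.

Lemma stepL_img (B : {set 'I_(a+b)}) (B1 : {set 'I_a}) :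
  (forall x, x \in B1 -> lshift b x \in B) ->
  forall x, x \in force_step e1 B1 -> lshift b x \in force_step E B.
Proof.
move=> HB x /force_stepP [/HB xB|[v vB [evx xB Hu]]].
  by apply: (subsetP (sub_force_step _ _)).
case xB1 : (lshift b x \in B); first by apply: (subsetP (sub_force_step _ _)); rewrite xB1.
apply: (force_in (v := lshift b v)); first exact: HB.
  by rewrite uniLL.
move=> u; case: (split_ordP u) => u' -> evu uB; last by rewrite uniLR in evu.
rewrite uniLL in evu; congr (lshift b _); apply: Hu => //.
by apply: contraNN uB; apply: HB.
Qed.

Lemma stepR_img (B : {set 'I_(a+b)}) (B2 : {set 'I_b}) :
  (forall x, x \in B2 -> rshift a x \in B) ->
  forall x, x \in force_step e2 B2 -> rshift a x \in force_step E B.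
Proof.
move=> HB x /force_stepP [/HB xB|[v vB [evx xB Hu]]].
  by apply: (subsetP (sub_force_step _ _)).
case xB1 : (rshift a x \in B); first by apply: (subsetP (sub_force_step _ _)); rewrite xB1.
apply: (force_in (v := rshift a v)); first exact: HB.
  by rewrite uniRR.
move=> u; case: (split_ordP u) => u' -> evu uB; first by rewrite uniRL in evu.
rewrite uniRR in evu; congr (rshift a _); apply: Hu => //.
by apply: contraNN uB; apply: HB.
Qed.

Lemma UB_uni c1 c2 : UB e1 c1 -> UB e2 c2 -> UB E (c1 + c2).
Proof.
move=> [S1 [c1S H1]] [S2 [c2S H2]].
exists (@lshift a b @: S1 :|: @rshift a b @: S2); split.
  apply: (leq_trans (leq_card_setU _ _)).
  by rewrite !card_imset //; [apply: leq_add | apply: rshift_inj | apply: lshift_inj].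
move=> t; rewrite card_ord => ht.
have L : forall x, x \in iter t (force_step e1) S1 ->
                   lshift b x \in iter t (force_step E) (@lshift a b @: S1 :|: @rshift a b @: S2).
  elim: (t) => [|s IH] y /=; first by move=> yS; rewrite inE imset_f.
  by apply: stepL_img.
have R : forall x, x \in iter t (force_step e2) S2 ->
                   rshift a x \in iter t (force_step E) (@lshift a b @: S1 :|: @rshift a b @: S2).
  elim: (t) => [|s IH] y /=; first by move=> yS; rewrite inE orbC imset_f.
  by apply: stepR_img.
apply/setP => i; rewrite inE.
case: (split_ordP i) => x ->.
  by apply: L; rewrite H1 ?inE // card_ord (leq_trans _ ht) // leq_addr.
by apply: R; rewrite H2 ?inE // card_ord (leq_trans _ ht) // leq_addl.
Qed.

End UniForce.


Definition en (l : seq (nat * nat)) (x y : nat) : bool := ((x, y) \in l) || ((y, x) \in l).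
Definition l1 := [:: (0,1);(1,2);(2,3);(3,0);(4,5)].
Definition l2 := [:: (0,1);(0,4);(0,5);(1,2);(1,3)].
Definition g1c : rel 'I_6 := fun x y => en l1 x y.
Definition dstar : rel 'I_6 := fun x y => en l2 x y.

Definition tP : seq (seq int) :=
 [:: [:: -1; 0; -1; 0; 0; -1];
     [:: 0; -1; 0; -1; 1; 0];
     [:: -1; 0; 0; 0; 0; 1];
     [:: 0; 0; -1; 0; 0; 1];
     [:: 0; 0; 0; -1; -1; 0];
     [:: 0; -1; 0; 0; -1; 0]]%Z.
Definition tQ : seq (seq int) :=
 [:: [:: -1; 0; -2; 1; 0; 0];
     [:: 0; -1; 0; 0; 1; -2];
     [:: -1; 0; 1; -2; 0; 0];
     [:: 0; -1; 0; 0; -2; 1];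
     [:: 0; 1; 0; 0; -1; -1];
     [:: -1; 0; 1; 1; 0; 0]]%Z.
Definition mxt (t : seq (seq int)) : 'M[int]_6 := \matrix_(i, j) nth 0%R (nth [::] t i) j.

Lemma PA : (mxt tP *m adjmx g1c = adjmx dstar *m mxt tP)%R.
Proof.
apply/matrixP => i j; rewrite !mxE !big_ord_recl !big_ord0 !mxE.
by case: i => [[|[|[|[|[|[|i]]]]]] Hi]; case: j => [[|[|[|[|[|[|j]]]]]] Hj].
Qed.

Lemma QP : (mxt tQ *m mxt tP = 3%:M)%R.
Proof.
apply/matrixP => i j; rewrite !mxE !big_ord_recl !big_ord0 !mxE.
by case: i => [[|[|[|[|[|[|i]]]]]] Hi]; case: j => [[|[|[|[|[|[|j]]]]]] Hj].
Qed.

Section CP.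
Local Open Scope ring_scope.

Lemma charpoly_sim n (A B P Q : 'M[int]_n) (c : int) :
  c != 0 -> Q *m P = c%:M -> P *m A = B *m P -> char_poly A = char_poly B.
Proof.
move=> c0 QP PA.
have hC : map_mx polyC P *m char_poly_mx A = char_poly_mx B *m map_mx polyC P.
  by rewrite /char_poly_mx mulmxBr mulmxBl -!map_mxM PA scalar_mxC.
have := congr1 determinant hC; rewrite !det_mulmx det_map_mx /char_poly => e.
have nz : \det P != 0.
  apply/eqP => h; have := congr1 determinant QP.
  rewrite det_mulmx h mulr0 det_scalar => /esym/eqP.
  by rewrite expf_eq0 (negbTE c0) andbF.
apply: (mulfI (x := (\det P)%:P)); first by rewrite polyC_eq0.
by rewrite e mulrC.
Qed.

End CP.


Definition C4 : rel 'I_4 := fun x y => en [:: (0,1);(1,2);(2,3);(3,0)] x y.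
Definition K2 : rel 'I_2 := fun x y => en [:: (0,1)] x y.
Definition g1 : rel 'I_6 := uni C4 K2.
Definition e0 : rel 'I_0 := fun _ _ => false.

Lemma g1_eq (i j : 'I_(4+2)) : g1 i j = g1c i j.
Proof.
rewrite /g1.
case: (split_ordP i) => x ->; case: (split_ordP j) => y ->;
rewrite ?uniLL ?uniRR ?uniLR ?uniRL.
- by case: x => [[|[|[|[|x]]]] Hx]; case: y => [[|[|[|[|y]]]] Hy].
- by case: x => [[|[|[|[|x]]]] Hx]; case: y => [[|[|y]] Hy].
- by case: x => [[|[|x]] Hx]; case: y => [[|[|[|[|y]]]] Hy].
- by case: x => [[|[|x]] Hx]; case: y => [[|[|y]] Hy].
Qed.

Lemma cospec_base : cospectral g1 dstar.
Proof.
rewrite /cospectral.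
have -> : adjmx g1 = adjmx g1c by apply/matrixP => i j; rewrite !mxE g1_eq.
apply: (charpoly_sim (Q := mxt tQ) (c := 3%:R)) => //.
exact: QP. exact: PA.
Qed.

Lemma en_sym l (n : nat) (x y : 'I_n) : en l x y = en l y x.
Proof. by rewrite /en orbC. Qed.

Lemma simple_C4 : simple_graph C4.
Proof. split; first by move=> x y; apply: en_sym.
by case => [[|[|[|[|x]]]] Hx]. Qed.
Lemma simple_K2 : simple_graph K2.
Proof. split; first by move=> x y; apply: en_sym.
by case => [[|[|x]] Hx]. Qed.
Lemma simple_dstar : simple_graph dstar.
Proof. split; first by move=> x y; apply: en_sym.
by case => [[|[|[|[|[|[|x]]]]]] Hx]. Qed.
Lemma simple_e0 : simple_graph e0.
Proof. by split. Qed.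

Lemma two_le_card (T : finType) (A : {set T}) x y :
  x \in A -> y \in A -> x != y -> 1 < #|A|.
Proof.
move=> xA yA xy; apply: (leq_trans _ (subset_leq_card (A := [set x; y]) _)).
  by rewrite cards2 xy.
by apply/subsetP => z; rewrite !inE => /orP[] /eqP ->.
Qed.

Lemma LB_C4 : LB C4 2.
Proof.
apply: LB_deg; first by case: simple_C4.
  by rewrite card_ord.
case => [[|[|[|[|x]]]] Hx] //.
- by apply: (two_le_card (x := Ordinal (isT : 1 < 4)) (y := Ordinal (isT : 3 < 4))); rewrite ?inE.
- by apply: (two_le_card (x := Ordinal (isT : 0 < 4)) (y := Ordinal (isT : 2 < 4))); rewrite ?inE.
- by apply: (two_le_card (x := Ordinal (isT : 1 < 4)) (y := Ordinal (isT : 3 < 4))); rewrite ?inE.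
- by apply: (two_le_card (x := Ordinal (isT : 0 < 4)) (y := Ordinal (isT : 2 < 4))); rewrite ?inE.
Qed.

Lemma LB_K2 : LB K2 1.
Proof.
apply: LB_deg; first by case: simple_K2.
  by rewrite card_ord.
case => [[|[|x]] Hx] //; apply/card_gt0P.
- by exists (Ordinal (isT : 1 < 2)); rewrite inE.
- by exists (Ordinal (isT : 0 < 2)); rewrite inE.
Qed.

Lemma LB_e0 : LB e0 0.
Proof. by []. Qed.

Lemma UB_e0 : UB e0 0.
Proof.
exists set0; split; first by rewrite cards0.
by move=> t _; apply/setP => -[].
Qed.

Lemma force_in' (T : finType) (e : rel T) (B : {set T}) v w :
  v \in B -> e v w -> (forall u, e v u -> u != w -> u \in B) ->
  w \in force_step e B.
Proof.
move=> vB evw H; apply: (force_in vB evw) => u evu uB.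
by apply/eqP; exact: contraNT (H u evu) uB.
Qed.

Definition o (k : nat) (H : k < 6) : 'I_6 := Ordinal H.

Lemma UB_dstar : UB dstar 2.
Proof.
pose S0 := [set o (isT : 2 < 6); o (isT : 4 < 6)].
exists S0; split; first by rewrite cards2.
pose S1 := force_step dstar S0.
have h1 : forall u : 'I_6, val u \in [:: 0; 1; 2; 4] -> u \in S1.
  case => [[|[|[|[|[|[|u]]]]]] Hu] //= _.
  - apply: (force_in' (v := o (isT : 4 < 6))); rewrite ?inE //.
    by case => [[|[|[|[|[|[|u]]]]]] Hu'] //= h1 h2; rewrite ?inE.
  - apply: (force_in' (v := o (isT : 2 < 6))); rewrite ?inE //.
    by case => [[|[|[|[|[|[|u]]]]]] Hu'] //= h1 h2; rewrite ?inE.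
  - by apply: (subsetP (sub_force_step _ _)); rewrite !inE.
  - by apply: (subsetP (sub_force_step _ _)); rewrite !inE.
have h2 : iter 2 (force_step dstar) S0 = setT.
  apply/setP => w; rewrite in_setT /=; fold S1.
  case: w => [[|[|[|[|[|[|u]]]]]] Hu] //.
  - by apply: (subsetP (sub_force_step _ _)); apply: h1.
  - by apply: (subsetP (sub_force_step _ _)); apply: h1.
  - by apply: (subsetP (sub_force_step _ _)); apply: h1.
  - apply: (force_in' (v := o (isT : 1 < 6))); first exact: h1. done.
    by case => [[|[|[|[|[|[|u]]]]]] Hu'] // _ _; apply: h1.
  - by apply: (subsetP (sub_force_step _ _)); apply: h1.
  - apply: (force_in' (v := o (isT : 0 < 6))); first exact: h1. done.
    by case => [[|[|[|[|[|[|u]]]]]] Hu'] // _ _; apply: h1.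
move=> t; rewrite card_ord => ht.
by rewrite -(subnK (leq_trans _ ht : 2 <= t)) // iterD h2 iter_setT.
Qed.


Definition NoDeg3 (T : finType) (e : rel T) :=
  forall x y1 y2 y3, e x y1 -> e x y2 -> e x y3 -> [|| y1 == y2, y1 == y3 | y2 == y3].
Definition HasDeg3 (T : finType) (e : rel T) :=
  exists x y1 y2 y3, [/\ e x y1, e x y2, e x y3 & [&& y1 != y2, y1 != y3 & y2 != y3]].

Lemma iso_deg3 n (e1 e2 : rel 'I_n) : graph_iso e1 e2 -> NoDeg3 e1 -> HasDeg3 e2 -> False.
Proof.
move=> [f Hf] N [x [y1 [y2 [y3 [h1 h2 h3 /and3P[d12 d13 d23]]]]]].
have E y : e1 (f^-1%g x) (f^-1%g y) = e2 x y by rewrite Hf !permKV.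
have := N _ _ _ _ (etrans (E y1) h1) (etrans (E y2) h2) (etrans (E y3) h3).
by rewrite !(inj_eq (@perm_inj _ f^-1%g)) (negbTE d12) (negbTE d13) (negbTE d23).
Qed.

Lemma NoDeg3_vals n (e : rel 'I_n) :
  (forall x, exists p q : nat, forall y, e x y -> (val y == p) || (val y == q)) ->
  NoDeg3 e.
Proof.
move=> H x y1 y2 y3; have [p [q Hpq]] := H x.
move=> /Hpq h1 /Hpq h2 /Hpq h3; rewrite -!val_eqE.
by case/orP: h1 => /eqP->; case/orP: h2 => /eqP->; case/orP: h3 => /eqP->;
   rewrite ?eqxx ?orbT.
Qed.

Section UniDeg.
Variables (a b : nat) (e1 : rel 'I_a) (e2 : rel 'I_b).
Lemma NoDeg3_uni : NoDeg3 e1 -> NoDeg3 e2 -> NoDeg3 (uni e1 e2).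
Proof.
move=> N1 N2 i y1 y2 y3.
case: (split_ordP i) => x ->; case: (split_ordP y1) => z1 ->;
case: (split_ordP y2) => z2 ->; case: (split_ordP y3) => z3 ->;
rewrite ?uniLL ?uniRR ?uniLR ?uniRL // => h1 h2 h3;
rewrite ?eq_lshift ?eq_rshift.
- exact: N1 h1 h2 h3.
- exact: N2 h1 h2 h3.
Qed.

Lemma HasDeg3_uni : HasDeg3 e1 -> HasDeg3 (uni e1 e2).
Proof.
move=> [x [y1 [y2 [y3 [h1 h2 h3 d]]]]].
exists (lshift b x), (lshift b y1), (lshift b y2), (lshift b y3).
by rewrite !uniLL !eq_lshift.
Qed.
End UniDeg.

Lemma NoDeg3_C4 : NoDeg3 C4.
Proof.
apply: NoDeg3_vals; case => [[|[|[|[|x]]]] Hx] //.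
- by exists 1, 3; case => [[|[|[|[|y]]]] Hy].
- by exists 0, 2; case => [[|[|[|[|y]]]] Hy].
- by exists 1, 3; case => [[|[|[|[|y]]]] Hy].
- by exists 0, 2; case => [[|[|[|[|y]]]] Hy].
Qed.

Lemma NoDeg3_K2 : NoDeg3 K2.
Proof.
by apply: NoDeg3_vals => x; exists 0, 1; case => [[|[|y]] Hy].
Qed.

Lemma NoDeg3_e0 : NoDeg3 e0.
Proof. by []. Qed.

Lemma HasDeg3_dstar : HasDeg3 dstar.
Proof.
by exists (o (isT : 0 < 6)), (o (isT : 1 < 6)), (o (isT : 4 < 6)), (o (isT : 5 < 6)).
Qed.

Fixpoint sz (m : nat) : nat := if m is m'.+1 then 6 + sz m' else 0.

Fixpoint G1 (m : nat) : rel 'I_(sz m) :=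
  match m return rel 'I_(sz m) with
  | 0 => e0
  | m'.+1 => uni g1 (@G1 m')
  end.
Fixpoint G2 (m : nat) : rel 'I_(sz m) :=
  match m return rel 'I_(sz m) with
  | 0 => e0
  | m'.+1 => uni dstar (@G2 m')
  end.

Lemma sz_eq m : sz m = 6 * m.
Proof. by elim: m => //= m ->; rewrite mulnS. Qed.

Lemma G_props m :
  [/\ simple_graph (@G1 m), simple_graph (@G2 m), NoDeg3 (@G1 m),
      cospectral (@G1 m) (@G2 m) & LB (@G1 m) (3 * m) /\ UB (@G2 m) (2 * m)].
Proof.
elim: m => [|m [s1 s2 n1 c [l u]]] /=.
  by split => //; split; [exact: LB_e0 | exact: UB_e0].
split.
- by apply: uni_simple => //; exact: (uni_simple simple_C4 simple_K2).
- by apply: uni_simple => //; exact: simple_dstar.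
- by apply: NoDeg3_uni => //; exact: (NoDeg3_uni NoDeg3_C4 NoDeg3_K2).
- by rewrite /cospectral !char_poly_uni cospec_base c.
- split; rewrite mulnS.
    by apply: LB_uni => //; apply: (LB_uni LB_C4 LB_K2).
  by apply: UB_uni => //; exact: UB_dstar.
Qed.

Lemma Z_lower (T : finType) (e : rel T) c : LB e c -> c <= #|T| -> c <= zero_forcing_number e.
Proof.
move=> L cT; rewrite /zero_forcing_number.
apply: (big_ind (fun n => c <= n)) => //.
  by move=> x y hx hy; rewrite leq_min hx hy.
by move=> S /eqP H; apply: (L _ _ H).
Qed.

Lemma bigmin_le (T : finType) (P : pred {set T}) (F : {set T} -> nat) x0 S :
  P S -> \big[minn/x0]_(A | P A) F A <= F S.
Proof.
move=> PS; move: (mem_index_enum S); elim: (index_enum _) => // A r IH.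
rewrite inE big_cons => /orP[/eqP <-|/IH h].
  by rewrite PS geq_minl.
by case: (P A) => //; rewrite geq_min h orbT.
Qed.

Lemma Z_upper (T : finType) (e : rel T) c : UB e c -> zero_forcing_number e <= c.
Proof.
move=> [S [cS H]]; rewrite /zero_forcing_number.
have zS : zero_forcing_set e S by rewrite /zero_forcing_set /force_closure H.
apply: (leq_trans _ cS); exact: (@bigmin_le _ (fun A => zero_forcing_set e A) (fun A => #|A|) _ S zS).
Qed.

Unset Implicit Arguments.
Theorem corollary5p2 :
  forall k : nat, 0 < k ->
  exists (n : nat) (e1 e2 : rel 'I_n),
    [/\ simple_graph e1, simple_graph e2, ~ graph_iso e1 e2,
        cospectral e1 e2 &
        zero_forcing_number e2 + k < zero_forcing_number e1].
Proof.
move=> k _; exists (sz k.+1), (@G1 k.+1), (@G2 k.+1).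
have [s1 s2 n1 c [l u]] := G_props k.+1.
split => //.
- move=> iso; apply: (iso_deg3 iso n1).
  by apply: HasDeg3_uni; exact: HasDeg3_dstar.
- apply: (leq_trans _ (Z_lower l _)); last by rewrite card_ord sz_eq; lia.
  apply: (leq_trans (n := (2 * k.+1 + k).+1)); first by rewrite ltnS leq_add2r Z_upper.
  lia.
Qed.
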